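(* Let $\rho\ge1$. Any deterministic LOCAL algorithm has the following lower bound on its round complexity, where $\Omega$ hides an absolute constant, if it is guaranteed to output, on every $n$-vertex graph, a $\rho$-approximate maximum cardinality matching. Specifically, it must use $\Omega(\log^* n/\rho)$ rounds on some $n$-vertex ring (cycle) graph. In particular, this holds even when restricted to graphs of maximum degree 2.
   Context: **Approximate matchings.** A matching $M$ of a graph is a $\rho$-approximate maximum cardinality matching if $|M|\ge \tau/\rho$, where $\tau$ is the maximum size of a matching in the graph. **LOCAL model on graphs.** Computation proceeds in synchronous rounds: - Each vertex does unbounded local computation and exchanges unbounded messages with its neighbours. - Vertices have unique $O(\log n)$-bit IDs. - After $t$ rounds, each vertex outputs which of its incident edges are in the matching. *)

(* Defs.v *)
From HB Require Import structures.
From mathcomp Require Import all_boot.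
From Stdlib Require Import Reals.

Set Implicit Arguments. Unset Strict Implicit. Unset Printing Implicit Defensive.

Definition simple_graph (n : nat) (e : rel 'I_n) : Prop :=
  symmetric e /\ irreflexive e.

Definition max_degree_le (n : nat) (e : rel 'I_n) (d : nat) : Prop :=
  forall v : 'I_n, (#|[set u | e v u]| <= d)%N.

(** The n-vertex ring (cycle) 0 - 1 - ... - (n-1) - 0 (a ring for n >= 3). *)
Definition ring_adj (n : nat) : rel 'I_n :=
  fun i j => (nat_of_ord j == (i.+1 %% n)%N) || (nat_of_ord i == (j.+1 %% n)%N).

Definition is_matching (n : nat) (e m : rel 'I_n) : Prop :=
  symmetric m /\ subrel m e /\ forall v : 'I_n, (#|[set u | m v u]| <= 1)%N.

Definition msize (n : nat) (m : rel 'I_n) : nat :=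
  #|[set p : 'I_n * 'I_n | m p.1 p.2 && (nat_of_ord p.1 < nat_of_ord p.2)%N]|.

(** M is a rho-approximate maximum cardinality matching of e:
    |M| >= tau / rho, i.e. tau <= rho * |M|, where tau is the maximum size of a
    matching, i.e. every matching m has |m| <= rho * |M|. *)
Definition approx_max_matching (rho : R) (n : nat) (e M : rel 'I_n) : Prop :=
  is_matching e M /\
  forall m : rel 'I_n, is_matching e m -> (INR (msize m) <= rho * INR (msize M))%R.

(** * Deterministic LOCAL algorithms (full-information form)
   A vertex holds a state (unbounded type).  Initially it knows n and its own ID.
   In each synchronous round every vertex sends its whole state to all neighbours
   (unbounded messages) and updates its state from its own state and the map
   "neighbour ID |-> that neighbour's state" (None if no neighbour has this ID).
   After each round a vertex may decide its output: a map from neighbour IDs to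
   booleans saying which incident edges are in the matching.  The first decision
   is final. *)
Record local_alg := LocalAlg {
  St : Type;
  init : nat -> nat -> St;                     (* n, own ID *)
  step : St -> (nat -> option St) -> St;
  decide : St -> option (nat -> bool) }.

Fixpoint state (A : local_alg) (n : nat) (e : rel 'I_n) (id : 'I_n -> nat)
    (r : nat) (v : 'I_n) : St A :=
  match r with
  | 0 => @init A n (id v)
  | r'.+1 =>
      @step A (state A e id r' v)
        (fun k => if [pick u | e v u && (id u == k)] is Some u
                  then Some (state A e id r' u) else None)
  end.

Fixpoint output (A : local_alg) (n : nat) (e : rel 'I_n) (id : 'I_n -> nat)
    (r : nat) (v : 'I_n) : option (nat -> bool) :=
  match r with
  | 0 => @decide A (state A e id 0 v)
  | r'.+1 => if output A e id r' v is Some o then Some o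
             else @decide A (state A e id r'.+1 v)
  end.

Definition all_decided (A : local_alg) (n : nat) (e : rel 'I_n) (id : 'I_n -> nat)
    (r : nat) : Prop :=
  forall v : 'I_n, output A e id r v <> None.

Definition says (A : local_alg) (n : nat) (e : rel 'I_n) (id : 'I_n -> nat)
    (r : nat) (u v : 'I_n) : bool :=
  if output A e id r u is Some o then o (id v) else false.

Definition out_matching (A : local_alg) (n : nat) (e : rel 'I_n) (id : 'I_n -> nat)
    (r : nat) : rel 'I_n :=
  fun u v => [&& e u v, says A e id r u v & says A e id r v u].

(** IDs: unique, O(log n) bits, i.e. taken from {0, ..., n^c - 1} *)
Definition valid_ids (c n : nat) (id : 'I_n -> nat) : Prop :=
  injective id /\ forall v : 'I_n, (id v < n ^ c)%N.

Definition correct_on (rho : R) (A : local_alg) (n : nat) (e : rel 'I_n)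
    (id : 'I_n -> nat) : Prop :=
  exists r : nat,
    all_decided A e id r /\
    (forall u v : 'I_n, e u v -> says A e id r u v = says A e id r v u) /\
    approx_max_matching rho e (out_matching A e id r).

Fixpoint logstar_aux (fuel n : nat) : nat :=
  match fuel with
  | 0 => 0
  | f.+1 => if (n <= 1)%N then 0 else (logstar_aux f (Nat.log2 n)).+1
  end.
Definition logstar (n : nat) : nat := logstar_aux n n.

(* Main.v *)
Require Import Defs.
From HB Require Import structures.
From mathcomp Require Import all_boot.
From Stdlib Require Import Reals.
From Stdlib Require Import Lra Classical FunctionalExtensionality.
From Stdlib Require ClassicalDescription PeanoNat.
From mathcomp Require Import ssreflect ssrfun ssrbool eqtype ssrnat seq div fintype finfun bigop finset.
From mathcomp Require Import zify.
Set Implicit Arguments. Unset Strict Implicit. Unset Printing Implicit Defensive.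

Definition good (N w : nat) (C : Type) (col : seq nat -> C) (c : C) (s : seq nat) :=
  sorted ltn s /\ all (fun x => x < N) s /\
  forall i, i + w <= size s -> col (take w (drop i s)) = c.

Fixpoint Fw (j q L : nat) : nat := if j is j'.+1 then Fw j' ((2^L)^q) j'.+2 else q * L.

Lemma pigeon_sum (C : finType) (col : nat -> C) (l : seq nat) :
  \sum_(c : C) count (fun x => col x == c) l = size l.
Proof.
elim: l => [|x l IH] /=; first by rewrite big1.
rewrite big_split /= IH (bigD1 (col x)) //= eqxx big1 ?addn0 //.
by move=> c /negbTE; rewrite eq_sym => ->.
Qed.

Lemma good_ext N w C (col : seq nat -> C) c p t T x :
  good N w col c (p ++ t :: T) -> sorted ltn (t :: T ++ [:: x]) -> x < N ->
  size (t :: T) = w.-1 -> 0 < w -> col (t :: T ++ [:: x]) = c ->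
  good N w col c (p ++ t :: T ++ [:: x]).
Proof.
move=> [Hs [Ha Hw]] Hs2 Hx Hsz Hw0 Hc; split; [|split].
- move: Hs; rewrite !sorted_cat_cons => /andP [-> _] /=; exact: Hs2.
- move: Ha; rewrite !all_cat /= !all_cat /= Hx andbT.
  by case/and3P=> -> -> ->.
- move=> i; rewrite !size_cat /= size_cat /= => Hi.
  have [Hlt|Hge] := ltnP (i + w) (size p + (size T).+2).
  + have -> : p ++ t :: T ++ [:: x] = (p ++ t :: T) ++ [:: x] by rewrite -catA.
    rewrite drop_cat size_cat /=.
    have Hi2 : i < size p + (size T).+1 by lia.
    rewrite Hi2 takel_cat; last by rewrite size_drop size_cat /=; lia.
    apply: Hw; rewrite size_cat /=; lia.
  + have -> : i = size p by move: Hsz Hge Hi Hw0 => /= Hsz; lia.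
    rewrite drop_cat ltnn subnn /= take_oversize //= size_cat /=.
    move: Hsz => /= Hsz; lia.
Qed.

Lemma comb j : forall (C : finType) (L N : nat) (col : seq nat -> C),
  Fw j #|C| L <= N -> exists s c, good N j.+1 col c s /\ L <= size s.
Proof.
elim: j => [|j IH] C L N col /= HF.
- case: L HF => [|L] HF.
    exists [::], (col [::]); split=> //; split=> //.
  have HC : 0 < #|C| by apply/card_gt0P; exists (col [::]).
  have [c Hc] : exists c, L < count (fun x => col [:: x] == c) (iota 0 N).
    apply/existsP; apply: contraT => /existsPn Hn.
    have := pigeon_sum (fun x => col [:: x]) (iota 0 N).
    rewrite size_iota => Hs.
    have : N <= \sum_(c : C) L.
      rewrite -Hs; apply: leq_sum => c _; by rewrite -ltnS ltnNge Hn.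
    rewrite sum_nat_const => HN; have : #|C| * L.+1 <= #|C| * L by exact: leq_trans HF HN.
    nia.
  exists [seq x <- iota 0 N | col [:: x] == c], c; split; last by rewrite size_filter.
  split; first exact: sorted_filter ltn_trans _ _ (iota_ltn_sorted 0 N).
  split.
    by apply/allP => x; rewrite mem_filter mem_iota add0n => /andP [_ /andP [_ ->]].
  move=> i Hi; rewrite addn1 in Hi; rewrite (drop_nth 0 Hi) /= take0.
  by have := mem_nth 0 Hi; rewrite mem_filter => /andP [/eqP -> _].
- set Pp := fun T c l => exists p, good N j.+2 col c (p ++ T) /\ size (p ++ T) = l.
  case: (classic (exists s c, good N j.+2 col c s /\ L <= size s)) => // H.
  have H' : forall s c, good N j.+2 col c s -> size s < L.
    move=> s c Hg; rewrite ltnNge; apply/negP => Hl; apply: H; by exists s, c.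
  pose Pb T c (l : 'I_L) : bool := if ClassicalDescription.excluded_middle_informative (Pp T c l) then true else false.
  pose col' T : {ffun C -> {ffun 'I_L -> bool}} := [ffun c => [ffun l => Pb T c l]].
  have [s' [c' [[Hs' [Ha' Hw']] Hsz']]] : exists s c, good N j.+1 col' c s /\ j.+2 <= size s.
    apply: IH; by rewrite !card_ffun card_bool card_ord.
  case: s' Hs' Ha' Hw' Hsz' => [|y s''] //= Hs' Ha' Hw' Hsz'.
  set T := take j.+1 (y :: s''); set T' := take j.+1 s''.
  set x := nth 0 s'' j; set c := col (take j.+2 (y :: s'')).
  have HT : col' T = col' T'.
    have h0 := Hw' 0; have h1 := Hw' 1.
    rewrite /= in h0 h1.
    rewrite drop0 in h1. rewrite /T /T' h0 ?h1 //; lia.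
  have Ht2 : take j.+2 (y :: s'') = y :: T'.
    by [].
  have Ht1 : T = y :: take j s''.
    by [].
  have Ht3 : y :: T' = T ++ [:: x].
    rewrite Ht1 /T' (take_nth 0) /x ?cats1 //; lia.
  have Hsorted2 : sorted ltn (T ++ [:: x]).
    by rewrite -Ht3 -Ht2; apply: take_sorted.
  have Hstep : forall l, Pp T c l -> Pp T' c l.+1.
    move=> l [p [Hg Hl]]; exists (rcons p y); split; last first.
      have HsT : size T = j.+1 by rewrite /T size_take /=; case: ifP => //; lia.
      have HsT' : size T' = j.+1 by rewrite /T' size_take; case: ifP => //; lia.
      by rewrite size_cat size_rcons; move: Hl; rewrite size_cat; lia.
    rewrite -cats1 -catA /= Ht3 Ht1 /=.
    move: Hg; rewrite Ht1 => Hg.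
    apply: good_ext => //.
    + move: Ha' => /andP [_ /allP]; apply; rewrite /x mem_nth //; lia.
    + by rewrite /= size_take; case: ifP => //; lia.
    + by rewrite /c Ht2 Ht3 Ht1.
  have Htr : forall l (Hl : l < L), Pp T' c l -> Pp T c l.
    move=> l Hl HP.
    have := congr1 (fun f : {ffun C -> {ffun 'I_L -> bool}} => f c (Ordinal Hl)) HT.
    rewrite /col' !ffunE /Pb /=.
    case: ClassicalDescription.excluded_middle_informative => //.
    by case: ClassicalDescription.excluded_middle_informative.
  have Hbase : Pp T c j.+1.
    exists [::]; split; last by rewrite /= size_take; case: ifP => //; lia.
    split; first by apply: take_sorted.
    split.
      have Ha'' : all (fun x => x < N) (y :: s'') := Ha'.
      by apply/allP => z /mem_take Hz; exact: (allP Ha'') z Hz.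
    move=> i; rewrite /= size_take; case: ifP; lia.
  have Hall : forall i, Pp T c (j.+1 + i).
    elim=> [|i IHi]; first by rewrite addn0.
    have HP := Hstep _ IHi.
    have Hl : (j.+1 + i).+1 < L.
      case: HP => p [Hg <-]; exact: H' Hg.
    rewrite addnS; exact: Htr Hl HP.
  case: (Hall L) => p [Hg Hl].
  have := H' _ _ Hg; rewrite Hl; lia.
Qed.

Lemma powE m n : Nat.pow m n = expn m n.
Proof. elim: n => [|n IH] //=; by rewrite expnS IH. Qed.

Definition ordn n (H : 0 < n) (i : nat) : 'I_n := insubd (Ordinal H) i.
Lemma ordnK n (H : 0 < n) i : i < n -> nat_of_ord (ordn H i) = i.
Proof. by move=> Hi; rewrite val_insubd Hi. Qed.

Definition path_adj n m : rel 'I_n := fun u v =>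
  ((nat_of_ord v == (nat_of_ord u).+1) && (nat_of_ord v < m)) || ((nat_of_ord u == (nat_of_ord v).+1) && (nat_of_ord u < m)).
Arguments path_adj : clear implicits.

Lemma path_simple n m : simple_graph (path_adj n m).
Proof.
split; first by move=> u v; rewrite /path_adj orbC.
by move=> u; rewrite /path_adj; apply/negP => /orP [] /andP [/eqP H _]; lia.
Qed.

Lemma path_deg n m : max_degree_le (path_adj n m) 2.
Proof.
move=> v; have H : 0 < n by have := ltn_ord v; lia.
apply: leq_trans (_ : #|[set ordn H v.+1; ordn H v.-1]| <= 2); last first.
  by rewrite cards2; case: (_ != _).
apply: subset_leq_card; apply/subsetP => u; rewrite !inE /path_adj.
case/orP => /andP [/eqP Hu Hm].
- apply/orP; left; apply/eqP/ord_inj => /=; rewrite ordnK; [lia|have := ltn_ord u; lia].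
- apply/orP; right; apply/eqP/ord_inj => /=; rewrite ordnK; [lia|have := ltn_ord v; lia].
Qed.

Lemma path_nb n m (H : 0 < n) p : 0 < p -> p.+1 < m -> m <= n ->
  forall u, path_adj n m (ordn H p) u = (u == ordn H p.-1) || (u == ordn H p.+1).
Proof.
move=> Hp Hpm Hmn u; rewrite /path_adj ordnK; last lia.
apply/idP/idP.
- case/orP => /andP [/eqP Hu Hm].
  + apply/orP; right; apply/eqP/ord_inj; rewrite ordnK; lia.
  + apply/orP; left; apply/eqP/ord_inj; rewrite ordnK; lia.
- case/orP => /eqP ->; rewrite ordnK; lia.
Qed.

Lemma ring_simple n : 2 < n -> simple_graph (@ring_adj n).
Proof.
move=> Hn; split; first by move=> u v; rewrite /ring_adj orbC.
move=> u; rewrite /ring_adj orbb; apply/negP => /eqP Hu.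
have Hu' := ltn_ord u.
case: (ltnP u.+1 n) => Hl.
- by move: Hu; rewrite modn_small //; lia.
- have : u.+1 = n by lia.
  by move=> E; move: Hu; rewrite E modnn; lia.
Qed.

Lemma ring_deg n : max_degree_le (@ring_adj n) 2.
Proof.
move=> v; have H : 0 < n by have := ltn_ord v; lia.
apply: leq_trans (_ : #|[set ordn H (v.+1 %% n); ordn H (if nat_of_ord v == 0 then n.-1 else v.-1)]| <= 2); last first.
  by rewrite cards2; case: (_ != _).
apply: subset_leq_card; apply/subsetP => u; rewrite !inE /ring_adj.
have Hv := ltn_ord v; have Hu := ltn_ord u.
case/orP => /eqP E.
- apply/orP; left; apply/eqP/ord_inj; rewrite ordnK; [exact: E| exact: ltn_pmod].
- apply/orP; right; apply/eqP/ord_inj; rewrite ordnK; last by case: ifP; lia.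
  move: E; case: (ltnP u.+1 n) => Hl.
  + rewrite modn_small // => E; rewrite E /=; lia.
  + have -> : u.+1 = n by lia.
    rewrite modnn => E; rewrite E /=; lia.
Qed.

Lemma ring_nb n (H : 0 < n) p : 0 < p -> p.+1 < n ->
  forall u, @ring_adj n (ordn H p) u = (u == ordn H p.-1) || (u == ordn H p.+1).
Proof.
move=> Hp Hpn u; rewrite /ring_adj ordnK; last lia.
have Hu := ltn_ord u.
rewrite (modn_small Hpn) orbC; congr orb.
- apply/idP/idP => [/eqP E|/eqP ->].
  + apply/eqP/ord_inj; rewrite ordnK; last lia.
    move: E; case: (ltnP u.+1 n) => Hl.
    * rewrite modn_small //; lia.
    * have -> : u.+1 = n by lia.
      rewrite modnn; lia.
  + rewrite ordnK; last lia. rewrite modn_small; [apply/eqP; lia|lia].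
- apply/idP/idP => [/eqP E|/eqP ->].
  + by apply/eqP/ord_inj; rewrite ordnK.
  + by rewrite ordnK.
Qed.

Definition comp n (s : seq nat) := [seq x <- iota 0 n | x \notin s].
Definition mkid n (s : seq nat) (v : 'I_n) : nat :=
  if nat_of_ord v < size s then nth 0 s v else nth 0 (comp n s) (nat_of_ord v - size s).
Arguments mkid : clear implicits.

Lemma size_comp n (s : seq nat) : uniq s -> all (fun x => x < n) s -> size (comp n s) = n - size s.
Proof.
move=> Hu Ha.
have Hp : perm_eq [seq x <- iota 0 n | x \in s] s.
  apply: uniq_perm; [exact: filter_uniq (iota_uniq 0 n)|exact: Hu|].
  move=> x; rewrite mem_filter mem_iota /=; apply/andP/idP => [[]//|Hx].
  by split=> //; move/allP: Ha => /(_ x Hx).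
have := size_filter (fun x => x \in s) (iota 0 n); rewrite (perm_size Hp) => E.
rewrite /comp size_filter.
have h := count_predC (fun x => x \in s) (iota 0 n).
rewrite size_iota -size_filter (perm_size Hp) in h.
change (count (predC (fun x => x \in s)) (iota 0 n) = n - size s).
by have := f_equal (subn^~ (size s)) h; rewrite addKn => <-.
Qed.

Lemma size_le_all n (s : seq nat) : uniq s -> all (fun x => x < n) s -> size s <= n.
Proof.
move=> Hu Ha; rewrite -(size_iota 0 n); apply: uniq_leq_size Hu _.
by move=> x Hx; rewrite mem_iota /=; move/allP: Ha => /(_ x Hx).
Qed.

Lemma mkid_valid n c (s : seq nat) : 0 < c -> uniq s -> all (fun x => x < n) s -> valid_ids c (mkid n s).
Proof.
move=> Hc Hu Ha.
have Hsz := size_le_all Hu Ha.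
have Hcs := size_comp Hu Ha.
have Hcu : uniq (comp n s) by exact: filter_uniq (iota_uniq 0 n).
have Hlt : forall v : 'I_n, mkid n s v < n.
  move=> v; rewrite /mkid; case: ifP => Hv.
  - by move/allP: Ha; apply; rewrite mem_nth.
  - have : nth 0 (comp n s) (v - size s) \in comp n s.
      rewrite mem_nth // Hcs; have := ltn_ord v; move/negbT: Hv; rewrite -leqNgt. lia.
    by rewrite mem_filter mem_iota => /andP [_ /andP [_]].
split; last first.
  move=> v; apply: leq_trans (Hlt v) _.
  rewrite powE; case: c Hc => [|c] // _; rewrite expnS.
  have Hn : 0 < n by have := ltn_ord v; lia.
  rewrite -{1}(muln1 n) leq_mul2l expn_gt0 Hn orbT //.
move=> u v; rewrite /mkid.
have Hu' := ltn_ord u; have Hv' := ltn_ord v.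
case: ifP => Hus; case: ifP => Hvs.
- move/eqP; rewrite nth_uniq // => /eqP; apply: ord_inj.
- move=> E; have : nth 0 (comp n s) (v - size s) \in comp n s.
    rewrite mem_nth // Hcs; lia.
  by rewrite mem_filter -E mem_nth.
- move=> E; have : nth 0 (comp n s) (u - size s) \in comp n s.
    rewrite mem_nth // Hcs; lia.
  by rewrite mem_filter E mem_nth.
- move/eqP; rewrite nth_uniq ?Hcs; [|lia|lia|done] => /eqP E; apply: ord_inj; lia.
Qed.

Lemma mkid_nth n (H : 0 < n) (s : seq nat) i : i < size s -> i < n -> mkid n s (ordn H i) = nth 0 s i.
Proof. by move=> Hs Hn; rewrite /mkid ordnK // Hs. Qed.

Fixpoint tow (s : nat) : nat := if s is s'.+1 then 2 ^ tow s' else 1.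


Lemma tow_gt x : x < tow x.
Proof. elim: x => [|x IH] //=. apply: (leq_ltn_trans IH). exact: ltn_expl. Qed.

Lemma tow_mono x y : x <= y -> tow x <= tow y.
Proof.
move=> /subnK <-; elim: (y - x) => [|d IH] //=.
apply: leq_trans IH _; exact: ltnW (ltn_expl _ _).
Qed.

Lemma two_le y : 2 * y <= 2 ^ y.
Proof.
elim: y => [|y IH] //; case: y IH => [|y] IH //.
rewrite expnS; have : 1 < 2 ^ y.+1 by rewrite -{1}(expn0 2) ltn_exp2l.
lia.
Qed.

Lemma sq_le y : y * y <= 2 ^ (2 ^ y).
Proof.
have h1 : y * y <= 4 ^ y.
  elim: y => [|y IH] //.
  have h : y < 4 ^ y by exact: ltn_expl.
  rewrite expnS; lia.
apply: leq_trans h1 _.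
have -> : 4 = 2 ^ 2 by [].
rewrite -expnM leq_exp2l //; exact: two_le.
Qed.

Lemma tow3 X : tow (X + 3) = 2 ^ (2 ^ (2 ^ tow X)).
Proof. by rewrite addn3. Qed.

Lemma Fw_bound j : forall X q Lx, q <= tow X -> Lx <= tow X -> j.+1 <= tow X ->
  Fw j q Lx <= tow (X + 3 * j.+1).
Proof.
have key : forall t, t * t <= 2 ^ (2 ^ (2 ^ t)).
  move=> t; apply: leq_trans (sq_le t) _; rewrite leq_exp2l //.
  apply: ltnW; exact: ltn_expl.
elim: j => [|j IH] X q Lx Hq HL Hj /=.
- rewrite muln1 tow3; apply: leq_trans (key (tow X)); exact: leq_mul.
- have -> : X + 3 * j.+2 = (X + 3) + 3 * j.+1 by lia.
  apply: IH.
  + rewrite -expnM tow3 leq_exp2l //; apply: leq_trans (sq_le (tow X)).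
    rewrite mulnC; exact: leq_mul.
  + apply: leq_trans Hj _; apply: tow_mono; lia.
    apply: leq_trans (ltnW Hj) _; apply: tow_mono; lia.
Qed.

Lemma ls_lower f : forall n s, 1 <= s -> s <= logstar_aux f n -> tow s <= n.
Proof.
elim: f => [|f IH] n s Hs /=; first by lia.
case: ifP => Hn //; first by lia.
case: s Hs => [|s] // _; rewrite ltnS => Hls.
case: s Hls => [|s] Hls; first by rewrite /=; lia.
have := IH (Nat.log2 n) s.+1 erefl Hls.
have Hn0 : (0 < n)%coq_nat by apply/ltP; lia.
have [h _] := PeanoNat.Nat.log2_spec n Hn0.
rewrite powE in h; move=> h2.
change (2 ^ tow s.+1 <= n); apply: leq_trans _ (introT leP h).
by rewrite leq_exp2l.
Qed.

Lemma ls_upper s : forall f n, s <= f -> tow s <= n -> s <= logstar_aux f n.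
Proof.
elim: s => [|s IH] [|f] n Hf Hn //=.
have Hn1 : 1 < n.
  apply: leq_trans Hn; rewrite /= -{1}(expn1 2) leq_exp2l //.
  exact: leq_ltn_trans (leq0n s) (tow_gt s).
rewrite ifN; last by rewrite -ltnNge.
rewrite ltnS; apply: IH; first lia.
have h : (Nat.pow 2 (tow s) <= n)%coq_nat by apply/leP; rewrite powE.
have := PeanoNat.Nat.log2_le_mono _ _ h.
rewrite PeanoNat.Nat.log2_pow2; last by apply/leP.
by move/leP.
Qed.

Fixpoint lstate (A : local_alg) (n : nat) (w : seq nat) (t i : nat) : St A :=
  match t with
  | 0 => @init A n (nth 0 w i)
  | t'.+1 => @step A (lstate A n w t' i)
      (fun k => if nth 0 w i.-1 == k then Some (lstate A n w t' i.-1)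
                else if nth 0 w i.+1 == k then Some (lstate A n w t' i.+1) else None)
  end.

Fixpoint loutput (A : local_alg) (n : nat) (w : seq nat) (t i : nat) : option (nat -> bool) :=
  match t with
  | 0 => @decide A (lstate A n w 0 i)
  | t'.+1 => if loutput A n w t' i is Some o then Some o else @decide A (lstate A n w t'.+1 i)
  end.

Definition lsays A n w t i j : bool :=
  if loutput A n w t i is Some o then o (nth 0 w j) else false.

Lemma local_state A n (e : rel 'I_n) (id : 'I_n -> nat) (v : nat -> 'I_n) (w : seq nat) :
  uniq w ->
  (forall i, i < size w -> id (v i) = nth 0 w i) ->
  (forall i, 0 < i -> i.+1 < size w -> forall u, e (v i) u = (u == v i.-1) || (u == v i.+1)) ->
  forall t i, t <= i -> i + t < size w -> state A e id t (v i) = lstate A n w t i.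
Proof.
move=> Hu Hid Hnb; elim=> [|t IH] i Hti Hs /=.
  by rewrite Hid //; lia.
rewrite IH; [|lia|lia]; congr (step _ _); apply: functional_extensionality => k.
have Hi0 : 0 < i by lia.
have Hi1 : i.+1 < size w by lia.
have Hne : nth 0 w i.-1 != nth 0 w i.+1.
  rewrite nth_uniq //.
  - rewrite neq_ltn; apply/orP; left; lia.
  - have h : i.-1 < size w by lia.
    exact: h.
case: pickP => [u /andP [Heu /eqP Hk]|Hn].
- move: Heu; rewrite Hnb // => /orP [] /eqP Eu; subst u.
  + rewrite Hid in Hk; last by lia.
    rewrite -Hk eqxx IH //; lia.
  + rewrite Hid in Hk; last by lia.
    rewrite -Hk (negbTE Hne) eqxx IH //; lia.
- have h1 := Hn (v i.-1); have h2 := Hn (v i.+1).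
  rewrite Hnb // eqxx /= Hid in h1; last by lia.
  rewrite Hnb // eqxx orbT /= Hid in h2; last by lia.
  by rewrite h1 h2.
Qed.

Lemma local_output A n (e : rel 'I_n) (id : 'I_n -> nat) (v : nat -> 'I_n) (w : seq nat) :
  uniq w ->
  (forall i, i < size w -> id (v i) = nth 0 w i) ->
  (forall i, 0 < i -> i.+1 < size w -> forall u, e (v i) u = (u == v i.-1) || (u == v i.+1)) ->
  forall t i, t <= i -> i + t < size w -> output A e id t (v i) = loutput A n w t i.
Proof.
move=> Hu Hid Hnb; elim=> [|t IH] i Hti Hs.
  have Hs' := local_state A Hu Hid Hnb Hti Hs.
  by rewrite /=; simpl in Hs'; rewrite Hs'.
have Hs' := local_state A Hu Hid Hnb Hti Hs.
rewrite /= IH; [|lia|lia]; simpl in Hs'; by rewrite Hs'.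
Qed.

Lemma output_stable A n (e : rel 'I_n) id t v o :
  output A e id t v = Some o -> forall d, output A e id (t + d) v = Some o.
Proof. move=> H; elim=> [|d IH]; first by rewrite addn0. by rewrite addnS /= IH. Qed.

Lemma output_eq A n (e : rel 'I_n) id t1 t2 v :
  output A e id t1 v <> None -> output A e id t2 v <> None ->
  output A e id t1 v = output A e id t2 v.
Proof.
case E1: (output A e id t1 v) => [o1|] // _; case E2: (output A e id t2 v) => [o2|] // _.
have [le|le] := leqP t1 t2.
- by have := output_stable E1 (t2 - t1); rewrite subnKC // E2.
- by have := output_stable E2 (t1 - t2); rewrite subnKC ?(ltnW le) // E1.
Qed.

Lemma decided_mono A n (e : rel 'I_n) id r1 r2 :
  all_decided A e id r1 -> r1 <= r2 -> all_decided A e id r2.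
Proof.
move=> H le v; have := H v; case E: (output A e id r1 v) => [o|] // _.
by have := output_stable E (r2 - r1); rewrite subnKC // => ->.
Qed.

Definition colf A n r (x : seq nat) : bool := lsays A n x r r r.+1 && lsays A n x r r.+1 r.

Lemma window_M c A n (H0 : 0 < n) r (s : seq nat) r' :
  0 < c -> sorted ltn s -> all (fun x => x < n) s ->
  (forall id, valid_ids c id -> all_decided A (@ring_adj n) id r) ->
  all_decided A (path_adj n (size s)) (mkid n s) r' ->
  forall i, i + (2*r).+2 <= size s ->
  out_matching A (path_adj n (size s)) (mkid n s) r' (ordn H0 (i + r)) (ordn H0 (i + r).+1)
  = colf A n r (take (2*r).+2 (drop i s)).
Proof.
move=> Hc Hs Ha Hring Hdec i Hi.
set k := (2*r).+2; set x := take k (drop i s).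
have Hu : uniq s := sorted_uniq ltn_trans ltnn Hs.
have Hsn := size_le_all Hu Ha.
have Hux : uniq x by apply: take_uniq; apply: drop_uniq.
have Hax : all (fun y => y < n) x.
  by apply/allP => y /mem_take /mem_drop Hy; move/allP: Ha; apply.
have Hsx : size x = k by rewrite /x size_take size_drop; case: ifP; lia.
have Hdr := Hring _ (mkid_valid Hc Hux Hax).
have LR := @local_output A n (@ring_adj n) (mkid n x) (fun j => ordn H0 j) x Hux.
have LR' := LR (fun j Hj => mkid_nth H0 Hj (ltac:(lia)))
   (fun j Hj0 Hj1 => ring_nb H0 Hj0 (ltac:(lia))).
have LT := @local_output A n (path_adj n (size s)) (mkid n s) (fun j => ordn H0 (i + j)) x Hux.
have LT' : forall t j, t <= j -> j + t < size x ->
    output A (path_adj n (size s)) (mkid n s) t (ordn H0 (i + j)) = loutput A n x t j.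
  apply: LT.
  - move=> j Hj; rewrite mkid_nth; [|lia|lia].
    by rewrite /x nth_take ?nth_drop //; lia.
  - move=> j Hj0 Hj1 u; rewrite path_nb; [|lia|lia|lia].
    by rewrite -addnS; have -> : (i + j).-1 = i + j.-1 by lia.
have Hdec1 : output A (path_adj n (size s)) (mkid n s) r (ordn H0 (i + r)) <> None.
  rewrite LT'; [|lia|lia]; rewrite -LR'; [exact: Hdr|lia|lia].
have Hdec2 : output A (path_adj n (size s)) (mkid n s) r (ordn H0 (i + r.+1)) <> None.
  rewrite LT'; [|lia|lia]; rewrite -LR'; [exact: Hdr|lia|lia].
have E1 := output_eq (Hdec (ordn H0 (i + r))) Hdec1.
have E2 := output_eq (Hdec (ordn H0 (i + r.+1))) Hdec2.
rewrite -addnS /out_matching /says E1 E2 LT'; [|lia|lia].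
rewrite LT'; [|lia|lia].
have -> : path_adj n (size s) (ordn H0 (i + r)) (ordn H0 (i + r.+1)).
  rewrite /path_adj !ordnK; [|lia|lia]; apply/orP; left; apply/andP; split; [apply/eqP|]; lia.
rewrite /colf /lsays /=.
rewrite !mkid_nth; [|lia|lia|lia|lia].
rewrite /x !nth_take; [|lia|lia]; rewrite !nth_drop.
by [].
Qed.

Definition Me n m : rel 'I_n := fun u v => path_adj n m u v && ~~ odd (minn u v).
Arguments Me : clear implicits.

Lemma Me_matching n m : is_matching (path_adj n m) (Me n m).
Proof.
split; [|split].
- by move=> u v; rewrite /Me minnC (path_simple n m).1.
- by move=> u v /andP [].
- move=> v; have H0 : 0 < n by have := ltn_ord v; lia.
  apply: leq_trans (_ : #|[set ordn H0 (if odd v then v.-1 else v.+1)]| <= 1); last by rewrite cards1.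
  apply: subset_leq_card; apply/subsetP => u; rewrite !inE /Me /path_adj.
  have Hu := ltn_ord u; have Hv := ltn_ord v.
  case/andP => /orP [] /andP [/eqP E Hm] Hodd; apply/eqP/ord_inj.
  + rewrite E (minn_idPl (leqnSn _)) in Hodd. rewrite (negbTE Hodd) ordnK; lia.
  + rewrite E (minn_idPr (leqnSn _)) in Hodd. rewrite E /= (negbTE Hodd) ordnK; lia.
Qed.

Lemma Me_size n (H0 : 0 < n) m : m <= n -> m./2 <= msize (Me n m).
Proof.
move=> Hmn.
pose f (j : 'I_m./2) : 'I_n * 'I_n := (ordn H0 (2 * j), ordn H0 (2 * j).+1).
have Hj : forall j : 'I_m./2, (2 * j).+1 < m.
  move=> j; have := ltn_ord j; have := odd_double_half m; lia.
have Hf : injective f.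
  move=> j1 j2 [] E _; apply: ord_inj; move: E => /(congr1 (@nat_of_ord n)).
  rewrite !ordnK; [lia| |]; have := Hj j1; have := Hj j2; lia.
rewrite -{1}(card_ord m./2) -(card_imset _ Hf) /msize.
apply: subset_leq_card; apply/subsetP => p /imsetP [j _ ->].
have := Hj j => Hjj.
rewrite inE /= /Me /path_adj !ordnK; [|lia|lia].
rewrite eqxx Hjj /= (minn_idPl (leqnSn _)) oddM /=; lia.
Qed.

Lemma small_msize n (H0 : 0 < n) m (M : rel 'I_n) r :
  subrel M (path_adj n m) ->
  (forall a, r <= a -> a + r + 2 <= m -> M (ordn H0 a) (ordn H0 a.+1) = false) ->
  msize M <= 2 * r.
Proof.
move=> Hsub Hfull.
set P := [set p : 'I_n * 'I_n | M p.1 p.2 && (nat_of_ord p.1 < nat_of_ord p.2)].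
have HP : forall p, p \in P -> nat_of_ord p.2 = (nat_of_ord p.1).+1 /\ (nat_of_ord p.1).+1 < m
                       /\ (nat_of_ord p.1 < r \/ m <= nat_of_ord p.1 + r + 1).
  move=> [a b]; rewrite inE /= => /andP [HM Hab].
  have := Hsub _ _ HM; rewrite /path_adj => /orP [] /andP [/eqP E Hm]; last lia.
  split=> //; split; first lia.
  case: (ltnP a r) => Har; first by left.
  right; rewrite leqNgt; apply/negP => Hlt.
  have := Hfull a Har (ltac:(lia)).
  have -> : ordn H0 a = a by apply: ord_inj; rewrite ordnK.
  have -> : ordn H0 (nat_of_ord a).+1 = b by apply: ord_inj; rewrite ordnK; [rewrite E|have := ltn_ord b; rewrite E].
  by rewrite HM.
have Hinj : {in P &, injective (fun p : 'I_n * 'I_n => p.1)}.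
  move=> [a1 b1] [a2 b2] H1 H2 /= E; subst a2.
  have [E1 _] := HP _ H1; have [E2 _] := HP _ H2.
  by congr pair; apply: ord_inj; rewrite /= in E1 E2; rewrite E1 E2.
rewrite /msize -/P -(card_in_imset Hinj).
set l := [seq ordn H0 j | j <- iota 0 r ++ iota (m - r - 1) r].
apply: leq_trans (_ : #|l| <= 2 * r); last first.
  by apply: leq_trans (card_size _) _; rewrite size_map size_cat !size_iota; lia.
apply: subset_leq_card; apply/subsetP => a /imsetP [[a' b] Hp /= ->].
have [E [Hm Hr]] := HP _ Hp; rewrite /= in E Hm Hr.
apply/mapP; exists (nat_of_ord a'); last by apply: ord_inj; rewrite ordnK.
rewrite mem_cat !mem_iota; lia.
Qed.

Lemma INR_affine k a c : INR (k * a + c) = (INR k * INR a + INR c)%R.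
Proof. by rewrite -plusE -multE plus_INR mult_INR. Qed.

Lemma INR_leq m n : m <= n -> (INR m <= INR n)%R.
Proof. by move/leP; apply: le_INR. Qed.

Theorem theorem7p2 :
  exists (C : R) (n0 : nat), (0 < C)%R /\
  forall (rho : R) (c : nat) (A : local_alg) (n : nat),
    (1 <= rho)%R -> (1 <= c)%N -> (n0 <= n)%N ->
    (forall (e : rel 'I_n) (id : 'I_n -> nat),
        simple_graph e -> max_degree_le e 2 -> valid_ids c id ->
        correct_on rho A e id) ->
    exists id : 'I_n -> nat,
      valid_ids c id /\
      forall r : nat, all_decided A (@ring_adj n) id r ->
        (C * INR (logstar n) / rho <= INR r)%R.
Proof.
exists (/40)%R, (tow 40); split; first lra.
move=> rho c A n Hrho Hc Hn Hcorr.
have H40 : 40 <= n := leq_trans (ltnW (tow_gt 40)) Hn.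
have H0 : 0 < n by lia.
have HL : 40 <= logstar n := ls_upper H40 Hn.
have HtL : tow (logstar n) <= n := @ls_lower n n (logstar n) (ltac:(lia)) (leqnn _).
clear Hn.
set L := logstar n in HL HtL *.
set b := (/ 40 * INR L / rho)%R.
have HLr : (40 <= INR L)%R.
  have := INR_leq HL; replace (INR 40) with 40%R by (simpl; ring); done.
have Hbr : (b * rho = / 40 * INR L)%R by rewrite /b; field; lra.
have Hb : (0 < b)%R by rewrite /b; apply: Rdiv_lt_0_compat; lra.
have HbL : (b <= INR L)%R by nra.
case: (classic (exists id : 'I_n -> nat, valid_ids c id /\
      forall r : nat, all_decided A (@ring_adj n) id r -> (b <= INR r)%R)) => [Hyes|Hneg]; first exact: Hyes.
exfalso.
have Hall : forall id, valid_ids c id ->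
    exists r, all_decided A (@ring_adj n) id r /\ (INR r < b)%R.
  move=> id Hid; apply: NNPP => Hno; apply: Hneg; exists id; split => // r Hr.
  apply: Rnot_lt_le => Hlt; apply: Hno; by exists r.
pose P (r : nat) : bool := if Rlt_dec (INR r) b then true else false.
have exP : exists r, P r by exists 0; rewrite /P /=; case: Rlt_dec.
have ubP : forall r, P r -> r <= L.
  move=> r; rewrite /P; case: Rlt_dec => // Hr _.
  have : (INR r < INR L)%R by lra.
  by move/INR_lt/ltP => /ltnW.
case: (ex_maxnP exP ubP) => R0 HPR0 HmaxR0.
have HR0b : (INR R0 < b)%R by move: HPR0; rewrite /P; case: Rlt_dec.
have Hdec : forall id, valid_ids c id -> all_decided A (@ring_adj n) id R0.
  move=> id Hid; have [r [Hd Hr]] := Hall id Hid.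
  apply: decided_mono Hd _; apply: HmaxR0; rewrite /P; by case: Rlt_dec.
set a := L %/ 20.
have Ha1 : a * 20 <= L := leq_trunc_div L 20.
have Ha2 : L < a.+1 * 20 := ltn_ceil L (isT : 0 < 20).
have HaR : (INR L <= 20 * INR a + 19)%R.
  have : L <= 20 * a + 19 by lia.
  move/INR_leq; rewrite INR_affine.
  by replace (INR 20) with 20%R by (simpl; ring); replace (INR 19) with 19%R by (simpl; ring).
have Ha3 : (2 <= INR a)%R.
  have : 2 <= a by lia.
  by move/INR_leq; replace (INR 2) with 2%R by (simpl; ring).
have HR0pos : (0 <= INR R0)%R := pos_INR R0.
have Hkey : (rho * INR R0 < INR a)%R by nra.
have HR0a : R0 < a.
  have : (INR R0 < INR a)%R by nra.
  by move/INR_lt/ltP.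
set m := 4 * a + 4.
have HF : Fw (2 * R0).+1 #|{: bool}| m <= n.
  rewrite card_bool.
  have Hm := tow_gt m.
  apply: leq_trans (Fw_bound (X := m) _ _ _) _; try lia.
  apply: leq_trans HtL; apply: tow_mono; lia.
have [s [cb [Hg Hsz]]] := comb (colf A n R0) HF.
have [Hs [Ha Hw]] := Hg.
have Hu : uniq s := sorted_uniq ltn_trans ltnn Hs.
have Hsn := size_le_all Hu Ha.
have [r' [Hdec' [_ [Hmat Happ]]]] :=
  Hcorr (path_adj n (size s)) (mkid n s) (@path_simple n (size s)) (@path_deg n (size s)) (mkid_valid Hc Hu Ha).
set M := out_matching A (path_adj n (size s)) (mkid n s) r' in Hmat Happ.
have HW : forall i, i + (2 * R0).+2 <= size s -> M (ordn H0 (i + R0)) (ordn H0 (i + R0).+1) = cb.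
  move=> i Hi; rewrite /M (window_M H0 Hc Hs Ha Hdec Hdec' Hi); exact: Hw.
case: cb Hg Hw HW => Hg Hw HW.
- have [Msym [_ Mdeg]] := Hmat.
  have h1 := HW 0 (ltac:(lia)); have h2 := HW 1 (ltac:(lia)).
  rewrite add0n in h1; rewrite add1n in h2.
  have := Mdeg (ordn H0 R0.+1).
  apply/negP; rewrite -ltnNge.
  apply: leq_trans (_ : #|[set ordn H0 R0; ordn H0 R0.+2]| <= _).
    rewrite cards2; case: eqP => // /(congr1 (@nat_of_ord n)); rewrite !ordnK; lia.
  apply: subset_leq_card; apply/subsetP => u; rewrite !inE => /orP [] /eqP ->.
  + by rewrite Msym.
  + by [].
- have Hsmall : msize M <= 2 * R0.
    apply: (@small_msize n H0 (size s) M R0).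
      by move=> u v /andP [].
    move=> x Hx1 Hx2; have := HW (x - R0) (ltac:(lia)).
    by rewrite subnK.
  have Hbig := Me_size H0 Hsn.
  have := Happ _ (Me_matching n (size s)).
  have h1 : (INR (2 * a + 2) <= INR (msize (Me n (size s))))%R.
    apply: INR_leq; apply: leq_trans Hbig; have := odd_double_half (size s); lia.
  have h2 : (INR (msize M) <= INR (2 * R0 + 0))%R by apply: INR_leq; lia.
  rewrite !INR_affine in h1 h2.
  replace (INR 2) with 2%R in h1, h2 by (simpl; ring).
  replace (INR 0) with 0%R in h2 by (simpl; ring).
  move=> h3.
  have h4 : (rho * INR (msize M) <= rho * (2 * INR R0 + 0))%R.
    apply: Rmult_le_compat_l; lra.
  nra.
Qed.
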